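(* Let $\mathbb{Z}_{(p_n)}$ be an odometer with scale $(p_n)$. Then $$\operatorname{Aut}^{(\infty)}(\mathbb{Z}_{(p_n)},+\mathbf{1})=\bigcup_{n=1}^{\infty}\operatorname{Aut}(\mathbb{Z}_{(p_n)},+p_n\mathbf{1}),$$ where the union is taken inside $\operatorname{Homeo}(\mathbb{Z}_{(p_n)})$. Moreover, the same equality holds with $(p_n)$ replaced by any scale $(s_n)$ equivalent to $(p_n)$, i.e. $\operatorname{Aut}^{(\infty)}(\mathbb{Z}_{(p_n)},+\mathbf{1})=\bigcup_{n}\operatorname{Aut}(\mathbb{Z}_{(p_n)},+s_n\mathbf{1})$.
   Context: A scale is a sequence $(p_n)$ of positive integers with $p_n\mid p_{n+1}$, not eventually constant. The odometer is $\mathbb{Z}_{(p_n)}=\{(x_n)\in\prod_n\mathbb{Z}/p_n\mathbb{Z}: x_{n+1}\equiv x_n\bmod p_n\}$; $\mathbf{1}=(1,1,\dots)$ and $+c\mathbf{1}$ denotes translation by $c\mathbf{1}$. Two scales $(p_n),(s_n)$ are equivalent if $\lim_n\nu_p(p_n)=\lim_n\nu_p(s_n)$ (in $\mathbb{N}\cup\{0,\infty\}$) for every prime $p$, $\nu_p$ being the $p$-adic valuation. $\operatorname{Aut}(X,T)$ is the group of homeomorphisms commuting with $T$ and $\operatorname{Aut}^{(\infty)}(X,T)=\bigcup_{n\ge1}\operatorname{Aut}(X,T^n)\subseteq\operatorname{Homeo}(X)$. *)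

(* Defs.v *)
From mathcomp Require Import all_boot.
Set Implicit Arguments. Unset Strict Implicit. Unset Printing Implicit Defensive.

Definition is_scale (p : nat -> nat) : Prop :=
  (forall n, 0 < p n) /\ (forall n, p n %| p n.+1) /\
  ~ (exists N, forall n, N <= n -> p n = p N).

Lemma scale_dvd p : is_scale p -> forall n, p n %| p n.+1.
Proof. by case=> _ []. Qed.

(* Equivalence of scales: for every prime q, the (monotone) limits of
   nu_q(p n) and nu_q(s n) in N u {oo} coincide; since both sequences are
   nondecreasing, the limit is the supremum, so equality of limits says that
   exactly the same values k are eventually reached. *)
Definition scale_equiv (p s : nat -> nat) : Prop :=
  forall q, prime q -> forall k,
    (exists n, k <= logn q (p n)) <-> (exists n, k <= logn q (s n)).

(* The odometer Z_(p_n): compatible sequences x n in Z/p_n Z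
   (represented by 0 <= x n < p n) with x (n+1) = x n mod p n. *)
Definition in_odo (p : nat -> nat) (x : nat -> nat) : Prop :=
  forall n, x n < p n /\ x n.+1 %% p n = x n.

Definition odo (p : nat -> nat) := {x : nat -> nat | in_odo p x}.

Definition coord p (x : odo p) (n : nat) : nat := proj1_sig x n.

Lemma add_in_odo p (Hp : forall n, p n %| p n.+1) (c : nat) (x : nat -> nat) :
  in_odo p x -> in_odo p (fun n => (x n + c) %% p n).
Proof.
move=> Hx n; have [lt e] := Hx n; split.
  by rewrite ltn_pmod // (leq_ltn_trans (leq0n _) lt).
by rewrite modn_dvdm // -modnDml e.
Qed.

Definition odo_add p (Hp : forall n, p n %| p n.+1) (c : nat) (x : odo p) : odo p :=
  exist _ (fun n => (coord x n + c) %% p n) (add_in_odo Hp c (proj2_sig x)).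

(* Continuity for the (subspace of the) product topology of the discrete
   spaces Z/p_n Z: each output coordinate is locally determined by finitely
   many input coordinates. *)
Definition odo_continuous p (f : odo p -> odo p) : Prop :=
  forall (x : odo p) (n : nat), exists m, forall y : odo p,
    (forall k, k <= m -> coord y k = coord x k) -> coord (f y) n = coord (f x) n.

Definition odo_homeo p (f : odo p -> odo p) : Prop :=
  exists g : odo p -> odo p,
    cancel f g /\ cancel g f /\ odo_continuous f /\ odo_continuous g.

Definition odo_Aut p (T : odo p -> odo p) (f : odo p -> odo p) : Prop :=
  odo_homeo f /\ forall x, f (T x) = T (f x).

Definition odo_Aut_inf p (T : odo p -> odo p) (f : odo p -> odo p) : Prop :=
  exists n, 0 < n /\ odo_Aut (iter n T) f.

(* Main.v *)
Require Import Defs.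
From mathcomp Require Import all_boot.
From Stdlib Require Import Classical FunctionalExtensionality ProofIrrelevance.

Lemma odo_eq p (x y : odo p) : (forall k, coord x k = coord y k) -> x = y.
Proof.
case: x y => [x hx] [y hy] /= H.
have E : x = y by apply: functional_extensionality.
subst y; by rewrite (proof_irrelevance _ hx hy).
Qed.

Lemma coord_add p (Hd : forall n, p n %| p n.+1) c x k :
  coord (odo_add Hd c x) k = (coord x k + c) %% p k.
Proof. by []. Qed.

Lemma odo_add0 p (Hd : forall n, p n %| p n.+1) x : odo_add Hd 0 x = x.
Proof.
apply: odo_eq => k; rewrite coord_add addn0 modn_small //.
by case: (proj2_sig x k).
Qed.

Lemma odo_addA p (Hd : forall n, p n %| p n.+1) a b x :
  odo_add Hd a (odo_add Hd b x) = odo_add Hd (b + a) x.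
Proof. by apply: odo_eq => k; rewrite !coord_add modnDml addnA. Qed.

Lemma iter_add p (Hd : forall n, p n %| p n.+1) n x :
  iter n (odo_add Hd 1) x = odo_add Hd n x.
Proof.
elim: n => [|n IH]; first by rewrite odo_add0.
by rewrite iterS IH odo_addA addn1.
Qed.

Lemma comm_mult p (Hd : forall n, p n %| p n.+1) (f : odo p -> odo p) n :
  (forall x, f (odo_add Hd n x) = odo_add Hd n (f x)) ->
  forall c x, f (odo_add Hd (n * c) x) = odo_add Hd (n * c) (f x).
Proof.
move=> H; elim=> [|c IH] x; first by rewrite muln0 !odo_add0.
by rewrite mulnS -odo_addA IH H odo_addA.
Qed.

Lemma chain_dvd (p : nat -> nat) : (forall n, p n %| p n.+1) ->
  forall i j, i <= j -> p i %| p j.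
Proof.
move=> Hd i j /subnK <-; elim: (j - i) => [|d IH]; first by rewrite add0n.
by rewrite addSn; apply: dvdn_trans IH (Hd _).
Qed.

Lemma key p (Hpos : forall n, 0 < p n) (Hd : forall n, p n %| p n.+1)
  (f : odo p -> odo p) n N :
  0 < n -> odo_continuous f ->
  (forall x, f (odo_add Hd n x) = odo_add Hd n (f x)) ->
  (forall K, gcdn n (p K) %| N) ->
  forall x, f (odo_add Hd N x) = odo_add Hd N (f x).
Proof.
move=> n0 Hc Hcom HN x; apply: odo_eq => j.
have [M HM] := Hc (odo_add Hd N x) j.
set K := maxn M j.
have [t Ht] : exists t, N = gcdn n (p K) * t.
  by move: (HN K) => /dvdnP [t ->]; exists t; rewrite mulnC.
case: (egcdnP (p K) n0) => km kn E _.
have Hc' : n * (km * t) = N %[mod p K].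
  by rewrite Ht mulnA (mulnC n) E mulnDl mulnAC -modnDml modnMl add0n.
have Hk : forall k, k <= K -> n * (km * t) = N %[mod p k].
  move=> k kK; have dk := @chain_dvd p Hd _ _ kK.
  by rewrite -(modn_dvdm _ dk) Hc' (modn_dvdm _ dk).
have := HM (odo_add Hd (n * (km * t)) x).
rewrite comm_mult // coord_add => <-.
  rewrite coord_add -modnDmr (Hk j) ?leq_maxr // modnDmr //.
move=> k kM; rewrite !coord_add -modnDmr (Hk k) ?modnDmr //.
exact: leq_trans kM (leq_maxl _ _).
Qed.

Lemma bounded_max (u : nat -> nat) d :
  (forall k, u k <= u 0 + d) -> exists K0, forall k, u k <= u K0.
Proof.
elim: d u => [|d IH] u H.
  by exists 0 => k; rewrite -[u 0]addn0.
case: (classic (exists k, u k = u 0 + d.+1)) => [[k Hk]|Hn].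
  by exists k => k'; rewrite Hk.
apply: IH => k; have := H k; rewrite addnS leq_eqVlt => /orP [/eqP E|//].
by exfalso; apply: Hn; exists k; rewrite addnS.
Qed.

Lemma gcd_max p (Hpos : forall n, 0 < p n) (Hd : forall n, p n %| p n.+1) n :
  0 < n -> exists K0, forall K, gcdn n (p K) %| gcdn n (p K0).
Proof.
move=> n0.
have [K0 HK0] : exists K0, forall k, gcdn n (p k) <= gcdn n (p K0).
  apply: (@bounded_max _ n) => k.
  apply: leq_trans (leq_addl _ _); apply: dvdn_leq => //; exact: dvdn_gcdl.
exists K0 => K.
set L := maxn K K0.
have d1 : gcdn n (p K) %| gcdn n (p L).
  by rewrite dvdn_gcd dvdn_gcdl /= (dvdn_trans (dvdn_gcdr _ _)) // chain_dvd // leq_maxl.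
have d2 : gcdn n (p K0) %| gcdn n (p L).
  by rewrite dvdn_gcd dvdn_gcdl /= (dvdn_trans (dvdn_gcdr _ _)) // chain_dvd // leq_maxr.
have gL : 0 < gcdn n (p L) by rewrite gcdn_gt0 n0.
have : gcdn n (p L) = gcdn n (p K0).
  by apply/eqP; rewrite eqn_leq HK0 dvdn_leq.
by move=> <-.
Qed.

Lemma seq_max (P : nat -> nat -> Prop) (l : seq nat) :
  (forall q i j, i <= j -> P q i -> P q j) ->
  (forall q, q \in l -> exists m, P q m) ->
  exists m, forall q, q \in l -> P q m.
Proof.
move=> Hm; elim: l => [|a l IH] H; first by exists 0.
have [m1 H1] := H a (mem_head _ _).
have [m2 H2] : exists m, forall q, q \in l -> P q m.
  by apply: IH => q ql; apply: H; rewrite inE ql orbT.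
exists (maxn m1 m2) => q; rewrite inE => /orP [/eqP ->|ql].
  by apply: Hm H1; rewrite leq_maxl.
by apply: Hm (H2 q ql); rewrite leq_maxr.
Qed.

Lemma general p (Hp : is_scale p) s (Hspos : forall n, 0 < s n)
  (Hsd : forall n, s n %| s n.+1) (Heq : scale_equiv p s) (f : odo p -> odo p) :
  odo_Aut_inf (odo_add (scale_dvd Hp) 1) f <->
  exists n, odo_Aut (odo_add (scale_dvd Hp) (s n)) f.
Proof.
have Hpos : forall n, 0 < p n by case: Hp.
set Hd := scale_dvd Hp.
split.
  move=> [n [n0 [Hh Hcom]]].
  have Hcom' : forall x, f (odo_add Hd n x) = odo_add Hd n (f x).
    by move=> x; rewrite -!iter_add.
  have [K0 HK0] := @gcd_max p Hpos Hd n n0.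
  set g := gcdn n (p K0).
  have g0 : 0 < g by rewrite gcdn_gt0 n0.
  have [m Hm] : exists m, forall q, q \in primes g -> logn q g <= logn q (s m).
    apply: seq_max.
      move=> q i j ij; move/leq_trans; apply.
      by apply: dvdn_leq_log => //; apply: chain_dvd.
    move=> q qg; have qp : prime q by move: qg; rewrite mem_primes => /andP [].
    apply/(Heq q qp (logn q g)); exists K0.
    by apply: dvdn_leq_log => //; apply: dvdn_gcdr.
  have gs : g %| s m.
    apply/dvdn_partP => // q qg; rewrite p_part pfactor_dvdn //.
      by apply: Hm.
    by move: qg; rewrite /= mem_primes => /andP [].
  exists m; split => //.
  case: Hh => h [_ [_ [Hc _]]].
  apply: (@key p Hpos Hd f n _ n0 Hc Hcom') => K.
  exact: dvdn_trans (HK0 K) gs.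
move=> [m [Hh Hcom]]; exists (s m); split => //; split => // x.
by rewrite !iter_add.
Qed.

Theorem corollary3p3 (p : nat -> nat) (Hp : is_scale p) :
  (forall f : odo p -> odo p,
     odo_Aut_inf (odo_add (scale_dvd Hp) 1) f <->
     exists n, odo_Aut (odo_add (scale_dvd Hp) (p n)) f) /\
  (forall s : nat -> nat, is_scale s -> scale_equiv p s ->
   forall f : odo p -> odo p,
     odo_Aut_inf (odo_add (scale_dvd Hp) 1) f <->
     exists n, odo_Aut (odo_add (scale_dvd Hp) (s n)) f).
Proof.
split.
  move=> f; apply: general; [by case: Hp | exact: scale_dvd | by []].
move=> s Hs Heq f; apply: general => //; [by case: Hs | exact: scale_dvd].
Qed.
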